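(* Let $V$ be a real vector space of dimension $m=p+q\ge3$ with a non-degenerate symmetric inner product of arbitrary signature $(p,q)$, and let $\nabla R$ be a covariant derivative algebraic curvature tensor on $V$. If the eigenvalues of $\mathcal{S}_{\nabla R}(\cdot)$ are constant on $S^+(V)$ and on $S^-(V)$, then $\mathcal{S}_{\nabla R}(x)$ is nilpotent for every complex null vector $x\in\mathcal{N}$.
   Context: A covariant derivative algebraic curvature tensor is $\nabla R\in\otimes^5V^*$ satisfying $\nabla R(a,b,c,d;e)=-\nabla R(b,a,c,d;e)=\nabla R(c,d,a,b;e)$, $\nabla R(a,b,c,d;e)+\nabla R(a,c,d,b;e)+\nabla R(a,d,b,c;e)=0$, and $\nabla R(a,b,c,d;e)+\nabla R(a,b,d,e;c)+\nabla R(a,b,e,c;d)=0$. The Szab\'o operator $\mathcal{S}_{\nabla R}(x)$ is the linear map of $V$ defined by $(\mathcal{S}_{\nabla R}(x)y,w)=\nabla R(y,x,x,w;x)$. $S^\pm(V)=\{v\in V:(v,v)=\pm1\}$ are the pseudo-spheres of unit spacelike and timelike vectors. Everything is extended complex-multilinearly to $V_{\mathbb{C}}=V\otimes\mathbb{C}$; $\mathcal{N}=\{v\in V_{\mathbb{C}}:(v,v)=0\}$. A linear map $A$ is nilpotent if $A^m=0$, equivalently $\operatorname{trace}(A^i)=0$ for $1\le i\le m$. *)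

(* Defs.v *)
From mathcomp Require Import all_boot all_algebra reals complex.
Set Implicit Arguments. Unset Strict Implicit. Unset Printing Implicit Defensive.
Import GRing.Theory Num.Theory.
Local Open Scope ring_scope.

(* V = K^m as row vectors 'rV[K]_m ; an element of (x)^5 V^* is given by its
   components T a b c d e = T(e_a,e_b,e_c,e_d;e_e) in the standard basis. *)
Definition tensor5 (K : Type) (m : nat) := 'I_m -> 'I_m -> 'I_m -> 'I_m -> 'I_m -> K.

Definition tensor5_eval (K : comNzRingType) (m : nat) (T : tensor5 K m)
  (a b c d e : 'rV[K]_m) : K :=
  \sum_(i < m) \sum_(j < m) \sum_(k < m) \sum_(l < m) \sum_(n < m)
     T i j k l n * a 0 i * b 0 j * c 0 k * d 0 l * e 0 n.

Definition is_cov_deriv_act (K : comNzRingType) (m : nat) (T : tensor5 K m) : Prop :=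
  (forall a b c d e, T a b c d e = - T b a c d e) /\
  (forall a b c d e, T a b c d e = T c d a b e) /\
  (forall a b c d e, T a b c d e + T a c d b e + T a d b c e = 0) /\
  (forall a b c d e, T a b c d e + T a b d e c + T a b e c d = 0).

Definition ip (K : comNzRingType) (m : nat) (G : 'M[K]_m) (u v : 'rV[K]_m) : K :=
  (u *m G *m v^T) 0 0.

Definition szabo_bil (K : comNzRingType) (m : nat) (T : tensor5 K m) (x : 'rV[K]_m)
  : 'M[K]_m :=
  \matrix_(a < m, b < m) tensor5_eval T (delta_mx 0 a) x x (delta_mx 0 b) x.

(* Szabo operator S(x) acting on row vectors (y |-> y *m S(x)), characterised by
   (S(x) y, w) = nablaR(y,x,x,w;x), i.e. S(x) *m G = szabo_bil T x. *)
Definition szabo (K : fieldType) (m : nat) (G : 'M[K]_m) (T : tensor5 K m)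
  (x : 'rV[K]_m) : 'M[K]_m :=
  szabo_bil T x *m invmx G.

Definition cplx_mx (R : rcfType) (m n : nat) (A : 'M[R]_(m, n)) : 'M[R[i]]_(m, n) :=
  map_mx (fun r => r%:C%C) A.
Definition cplx_tensor (R : rcfType) (m : nat) (T : tensor5 R m) : tensor5 R[i] m :=
  fun a b c d e => (T a b c d e)%:C%C.

Definition eigenvalues (R : rcfType) (m : nat) (A : 'M[R]_m) : R[i] -> bool :=
  fun z => root (char_poly (cplx_mx A)) z.

Definition nilpotent_mx (K : pzRingType) (m : nat) (A : 'M[K]_m) : Prop :=
  exists k : nat, A ^+ k = 0.

(* Main.v *)
Require Import Defs.
From mathcomp Require Import all_boot all_algebra reals complex.
From mathcomp Require Import ring lra order.
From Stdlib Require Import Classical FunctionalExtensionality.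
Set Implicit Arguments. Unset Strict Implicit. Unset Printing Implicit Defensive.
Import GRing.Theory Num.Theory.
Local Open Scope ring_scope.


Definition SB (K : comNzRingType) n (T : tensor5 K n) (Gi : 'M[K]_n) (x : 'rV[K]_n) :=
  szabo_bil T x *m Gi.
Definition Phi (K : comNzRingType) n (T : tensor5 K n) (Gi G : 'M[K]_n) (s : seq K)
  (sg : K) (x : 'rV[K]_n) : 'M[K]_n :=
  (\prod_(r <- s) ((SB T Gi x) ^+ 2 - (sg * ip G x x ^+ 3 * r ^+ 2)%:M)) ^+ n.
Definition tmap (K L : Type) (f : K -> L) n (T : tensor5 K n) : tensor5 L n :=
  fun a b c d e => f (T a b c d e).

Section Map.
Variables (K L : comNzRingType) (f : {rmorphism K -> L}).

Lemma map_t5 n (T : tensor5 K n) a b c d e :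
  f (tensor5_eval T a b c d e) = tensor5_eval (tmap f T) (map_mx f a) (map_mx f b)
     (map_mx f c) (map_mx f d) (map_mx f e).
Proof.
rewrite /tensor5_eval rmorph_sum; apply: eq_bigr => i _.
rewrite rmorph_sum; apply: eq_bigr => j _.
rewrite rmorph_sum; apply: eq_bigr => k _.
rewrite rmorph_sum; apply: eq_bigr => l _.
rewrite rmorph_sum; apply: eq_bigr => o _.
by rewrite !rmorphM !mxE.
Qed.

Lemma map_szabo_bil n (T : tensor5 K n) x :
  map_mx f (szabo_bil T x) = szabo_bil (tmap f T) (map_mx f x).
Proof.
by apply/matrixP => i j; rewrite !mxE map_t5 !map_delta_mx.
Qed.

Lemma map_ip n (G : 'M[K]_n) u v :
  f (ip G u v) = ip (map_mx f G) (map_mx f u) (map_mx f v).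
Proof. rewrite /ip map_trmx -!map_mxM. by rewrite [in RHS]mxE. Qed.

Lemma map_SB n (T : tensor5 K n) Gi x :
  map_mx f (SB T Gi x) = SB (tmap f T) (map_mx f Gi) (map_mx f x).
Proof. by rewrite /SB map_mxM map_szabo_bil. Qed.

Lemma map_Phi n (T : tensor5 K n) Gi G s sg x :
  map_mx f (Phi T Gi G s sg x) =
  Phi (tmap f T) (map_mx f Gi) (map_mx f G) (map f s) (f sg) (map_mx f x).
Proof.
rewrite /Phi rmorphXn rmorph_prod big_map; congr (_ ^+ _); apply: eq_bigr => r _.
rewrite /= map_mxB (rmorphXn (map_mx f : 'M_n -> 'M_n)). rewrite [X in X ^+ 2 - _]map_SB map_scalar_mx !rmorphM. by rewrite !map_ip.
Qed.
End Map.


Lemma poly_ext (R : rcfType) n (T : tensor5 R[i] n) (Gi G : 'M[R[i]]_n) s sg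
  (a b : 'rV[R[i]]_n) (M : R) :
  (forall t : R, M <= t -> Phi T Gi G s sg (a + (t%:C)%C *: b) = 0) ->
  forall z, Phi T Gi G s sg (a + z *: b) = 0.
Proof.
move=> H.
pose P := Phi (tmap polyC T) (map_mx polyC Gi) (map_mx polyC G) (map polyC s) sg%:P
   (map_mx polyC a + 'X *: map_mx polyC b).
have EP : forall z, Phi T Gi G s sg (a + z *: b) = map_mx (horner_eval z) P.
  move=> z; rewrite /P map_Phi.
  have hC : forall c : R[i], horner_eval z c%:P = c.
    by move=> c; rewrite /horner_eval hornerC.
  have mC : forall p q (A : 'M[R[i]]_(p, q)), map_mx (horner_eval z) (map_mx polyC A) = A.
    move=> p q A; apply/matrixP => i j; rewrite mxE mxE; exact: hC.
  have -> : tmap (horner_eval z) (tmap polyC T) = T.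
    by do 5 (apply: functional_extensionality => ?); rewrite /tmap hC.
  rewrite !mC -map_comp (eq_map hC) map_id.
  rewrite [X in _ = Phi _ _ _ _ X _](_ : _ = sg); last exact: hC.
  rewrite map_mxD map_mxZ !mC.
  rewrite [X in _ = Phi _ _ _ _ _ (_ + X *: _)](_ : _ = z) //.
  exact: hornerX.
move=> z; rewrite EP; apply/matrixP => i j; rewrite !mxE.
suff -> : P i j = 0 by rewrite /horner_eval horner0.
apply/eqP/negPn/negP => nz.
pose rs := map (fun k : nat => ((M + k%:R)%:C)%C) (iota 0 (size (P i j))).
have := @max_poly_roots _ (P i j) rs nz.
rewrite size_map size_iota ltnn => Hm; suff : false by []; apply: Hm.
  apply/allP => w /mapP [k _ ->]; apply/rootP.
  have := EP ((M + k%:R)%:C)%C; rewrite H; last by rewrite lerDl ler0n.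
  by move/matrixP/(_ i j); rewrite !mxE /horner_eval => <-.
rewrite map_inj_uniq ?iota_uniq // => k l /complexI /addrI /eqP.
by rewrite eqr_nat => /eqP.
Qed.


Lemma roots_CH (C : closedFieldType) n (B : 'M[C]_n.+1) (s : seq C) :
  (forall z, root (char_poly B) z -> z \in s) ->
  horner_mx B ((\prod_(r <- s) ('X - r%:P)) ^+ n.+1) = 0.
Proof.
move=> Hs.
have [rs Ers] := closed_field_poly_normal (char_poly B).
have lc : lead_coef (char_poly B) = 1 by apply/monicP/char_poly_monic.
rewrite lc scale1r in Ers.
have szr : size rs = n.+1.
  by have := size_char_poly B; rewrite Ers size_prod_XsubC => -[].
have Hrs : forall z, z \in rs -> z \in s.
  by move=> z zr; apply: Hs; rewrite Ers root_prod_XsubC.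
have Hd : char_poly B %| (\prod_(r <- s) ('X - r%:P)) ^+ (size rs).
  rewrite Ers; elim: rs Hrs {Ers szr} => [|z rs IH] Hrs; first by rewrite big_nil dvd1p.
  rewrite big_cons exprS; apply: dvdp_mul.
    by rewrite dvdp_XsubCl root_prod_XsubC; apply: Hrs; rewrite inE eqxx.
  by apply: IH => w wr; apply: Hrs; rewrite inE wr orbT.
rewrite -szr; case/dvdpP: Hd => q ->.
by rewrite rmorphM /= Cayley_Hamilton mulr0.
Qed.

Lemma step1_alg (C : closedFieldType) n (B : 'M[C]_n.+1) (s : seq C) (k : C) :
  (forall z, root (char_poly B) z -> z \in s) ->
  (\prod_(r <- s) ((k *: B) ^+ 2 - (k ^+ 2 * r ^+ 2)%:M)) ^+ n.+1 = 0.
Proof.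
move=> Hs.
have E : forall r, (k *: B) ^+ 2 - (k ^+ 2 * r ^+ 2)%:M =
    horner_mx B (('X - r%:P) * ((k ^+ 2)%:P * ('X + r%:P))).
  move=> r.
  have -> : ('X - r%:P) * ((k ^+ 2)%:P * ('X + r%:P)) =
      (k%:P * 'X) ^+ 2 - (k ^+ 2 * r ^+ 2)%:P.
    rewrite polyCM; ring.
  rewrite (rmorphB (horner_mx B)) (rmorphXn (horner_mx B)) (rmorphM (horner_mx B)).
  by rewrite /= horner_mx_X !horner_mx_C -mul_scalar_mx.
under eq_bigr do rewrite E.
by rewrite -rmorph_prod -rmorphXn big_split /= exprMn rmorphM /= roots_CH // mul0r.
Qed.


Lemma t5_scale (K : comNzRingType) n (T : tensor5 K n) a d x (c : K) :
  tensor5_eval T a (c *: x) (c *: x) d (c *: x) = c ^+ 3 * tensor5_eval T a x x d x.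
Proof.
rewrite /tensor5_eval mulr_sumr; apply: eq_bigr => i _.
rewrite mulr_sumr; apply: eq_bigr => j _.
rewrite mulr_sumr; apply: eq_bigr => k _.
rewrite mulr_sumr; apply: eq_bigr => l _.
rewrite mulr_sumr; apply: eq_bigr => o _.
rewrite !mxE; ring.
Qed.

Lemma bil_scale (K : comNzRingType) n (T : tensor5 K n) x (c : K) :
  szabo_bil T (c *: x) = c ^+ 3 *: szabo_bil T x.
Proof. by apply/matrixP => i j; rewrite !mxE t5_scale. Qed.

Lemma ip_expand (K : comNzRingType) n (G : 'M[K]_n) u v (t : K) :
  ip G (u + t *: v) (u + t *: v) =
  ip G u u + t * (ip G u v + ip G v u) + t ^+ 2 * ip G v v.
Proof.
rewrite /ip linearD /= linearZ /= !mulmxDl !mulmxDr -!scalemxAl -!scalemxAr.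
rewrite !mxE /=. ring.
Qed.

Lemma ip_delta (K : comNzRingType) n (G : 'M[K]_n) i j :
  ip G (delta_mx 0 i) (delta_mx 0 j) = G i j.
Proof. by rewrite /ip trmx_delta -rowE -colE !mxE. Qed.

Lemma prod_const_seq (K : pzSemiRingType) (I : Type) (s : seq I) (c : K) :
  \prod_(r <- s) c = c ^+ size s.
Proof. by elim: s => [|a s IH]; rewrite ?big_nil ?big_cons ?IH ?exprS. Qed.

Lemma nonnull (R : realType) n (G : 'M[R]_n.+1) :
  G^T = G -> \det G != 0 -> exists y, ip G y y != 0.
Proof.
move=> sym dG; apply: NNPP => H; move: dG; apply/negP/negPn/eqP.
have H0 : forall y, ip G y y = 0.
  by move=> y; apply/eqP/negPn/negP => Hy; apply: H; exists y.
suff -> : G = 0 by rewrite det0.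
apply/matrixP => i j; rewrite mxE.
have := ip_expand G (delta_mx 0 i) (delta_mx 0 j) 1.
have -> : ip G (delta_mx 0 j) (delta_mx 0 i) = G i j.
  by rewrite ip_delta -[in LHS]sym mxE.
rewrite !H0 ip_delta => E; lra.
Qed.

Lemma ip_scale (K : comNzRingType) n (G : 'M[K]_n) u (c : K) :
  ip G (c *: u) (c *: u) = c ^+ 2 * ip G u u.
Proof. by rewrite /ip linearZ /= -!scalemxAl -scalemxAr !mxE mulrA -expr2. Qed.

Import Order.TTheory.

Theorem theorem1p5 (R : realType) (m : nat) (G : 'M[R]_m) (T : tensor5 R m) :
  (3 <= m)%N ->
  G^T = G -> \det G != 0 ->
  is_cov_deriv_act T ->
  (forall x y : 'rV[R]_m, ip G x x = 1 -> ip G y y = 1 ->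
     eigenvalues (szabo G T x) =1 eigenvalues (szabo G T y)) ->
  (forall x y : 'rV[R]_m, ip G x x = -1 -> ip G y y = -1 ->
     eigenvalues (szabo G T x) =1 eigenvalues (szabo G T y)) ->
  forall x : 'rV[R[i]]_m, ip (cplx_mx G) x x = 0 ->
    nilpotent_mx (szabo (cplx_mx G) (cplx_tensor T) x).
Proof.
case: m G T => [//|n] G T _ sym dG _ hp hm x xnull.
pose cT := cplx_tensor T. pose Gi := cplx_mx (invmx G). pose cG := cplx_mx G.
have Ecplx : forall p q (A : 'M[R]_(p,q)), cplx_mx A = map_mx (real_complex R) A by [].
have Esz : forall y, szabo cG cT y = SB cT Gi y.
  by move=> y; rewrite /szabo /SB /Gi /cG !Ecplx map_invmx.
have ESBr : forall y : 'rV[R]_n.+1, SB cT Gi (cplx_mx y) = cplx_mx (szabo G T y).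
  by move=> y; rewrite /szabo /Gi !Ecplx -map_SB.
have Eip : forall y, ip cG (cplx_mx y) (cplx_mx y) = (ip G y y)%:C%C.
  by move=> y; rewrite /cG !Ecplx -map_ip.
have [sg [x0 [Hsg [Hx0 Heig]]]] : exists sg : R, exists x0, (sg = 1 \/ sg = -1) /\
    ip G x0 x0 = sg /\ forall y, ip G y y = sg ->
    eigenvalues (szabo G T y) =1 eigenvalues (szabo G T x0).
  have : exists y, ip G y y != 0 by exact: nonnull.
  case=> y Hy.
  pose q := ip G y y. pose c := (Num.sqrt `|q|)^-1.
  have Hc : ip G (c *: y) (c *: y) = q / `|q|.
    by rewrite ip_scale /c exprVn sqr_sqrtr ?normr_ge0 // mulrC.
  case: (ltrP 0 q) => q0.
  - exists 1, (c *: y); split; first by left.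
    split; first by rewrite Hc gtr0_norm // divff // gt_eqF.
    by move=> z Hz; apply: hp => //; rewrite Hc gtr0_norm // divff // gt_eqF.
  - have qn : q < 0 by rewrite lt_neqAle Hy q0.
    exists (-1), (c *: y); split; first by right.
    split; first by rewrite Hc ltr0_norm // invrN mulrN divff // lt_eqF.
    by move=> z Hz; apply: hm => //; rewrite Hc ltr0_norm // invrN mulrN divff // lt_eqF.
have [s0 Es0] := closed_field_poly_normal (char_poly (cplx_mx (szabo G T x0))).
rewrite (monicP (char_poly_monic _)) scale1r in Es0.
have Hroots : forall y, ip G y y = sg ->
    forall z, root (char_poly (cplx_mx (szabo G T y))) z -> z \in s0.
  move=> y Hy z; have := Heig y Hy z; rewrite /eigenvalues => ->.
  by rewrite Es0 root_prod_XsubC.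
pose Phx := Phi cT Gi cG s0 (sg%:C)%C.
have Step1 : forall y, 0 < sg * ip G y y -> Phx (cplx_mx y) = 0.
  move=> y Hpos; set q := ip G y y in Hpos *.
  pose k := Num.sqrt (sg * q).
  have k0 : 0 < k by rewrite sqrtr_gt0.
  pose y0 := k^-1 *: y.
  have Hy0 : ip G y0 y0 = sg.
    rewrite ip_scale exprVn sqr_sqrtr ?(ltW Hpos) // -/q.
    have q0 : q != 0 by apply/eqP => q0; move: Hpos; rewrite q0 mulr0 ltxx.
    by case: Hsg => ->; field; rewrite ?oppr_eq0.
  have Ey : y = k *: y0 by rewrite /y0 scalerA divff ?scale1r // gt_eqF.
  have Sy : szabo G T y = k ^+ 3 *: szabo G T y0.
    by rewrite {1}Ey /szabo bil_scale -scalemxAl.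
  have Ek : (sg%:C * (q%:C) ^+ 3 = ((k ^+ 3)%:C) ^+ 2)%C.
    rewrite -!rmorphXn -rmorphM; congr (_ %:C)%C.
    rewrite -exprM mulnC exprM sqr_sqrtr ?(ltW Hpos) //.
    by case: Hsg => ->; ring.
  rewrite /Phx /Phi ESBr Eip Sy Ecplx map_mxZ -Ecplx.
  under eq_bigr => r _ do rewrite Ek.
  exact: step1_alg (Hroots y0 Hy0).
have Step2 : forall y, Phx (cplx_mx y) = 0.
  move=> y; set q := ip G y y; set b := ip G y x0 + ip G x0 y.
  have := @poly_ext R n.+1 cT Gi cG s0 (sg%:C)%C (cplx_mx y) (cplx_mx x0)
    (`|q| + `|b| + 1) _ 0.
  rewrite scale0r addr0; apply => t Ht.
  have -> : cplx_mx y + (t%:C)%C *: cplx_mx x0 = cplx_mx (y + t *: x0).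
    by rewrite !Ecplx map_mxD map_mxZ.
  apply: Step1; rewrite ip_expand Hx0 -/q -/b.
  have nq := normr_ge0 q; have nb := normr_ge0 b.
  have q1 := ler_norm q; have q2 := ler_norm (- q); rewrite normrN in q2.
  have b1 := ler_norm b; have b2 := ler_norm (- b); rewrite normrN in b2.
  have t1 : 0 <= t * (t - (`|q| + `|b| + 1)) by apply: mulr_ge0; lra.
  have t2 : 0 <= (t - 1) * `|q| by apply: mulr_ge0; lra.
  have t3 : 0 <= t * (`|b| - b) by apply: mulr_ge0; lra.
  have t4 : 0 <= t * (`|b| + b) by apply: mulr_ge0; lra.
  by case: Hsg => ->; nra.
pose u := map_mx (@complex.Re R) x; pose v := map_mx (@complex.Im R) x.
have Ex : x = cplx_mx u + 'i%C *: cplx_mx v.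
  by apply/matrixP => i j; rewrite !mxE [LHS]complexE mulrC.
have Phix : Phx x = 0.
  rewrite Ex; apply: (@poly_ext R n.+1 cT Gi cG s0 (sg%:C)%C _ _ 0) => t _.
  have -> : cplx_mx u + (t%:C)%C *: cplx_mx v = cplx_mx (u + t *: v).
    by rewrite !Ecplx map_mxD map_mxZ.
  exact: Step2.
exists (2 * size s0 * n.+1)%N.
rewrite Esz; move: Phix; rewrite /Phx /Phi xnull.
under eq_bigr => r _ do rewrite expr0n /= mulr0 mul0r (raddf0 (@scalar_mx _ n.+1)) subr0.
by rewrite prod_const_seq -!exprM mulnA.
Qed.
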